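(* Let $\phi_\alpha$ be either $\|\cdot\|_1$ or $(p-1)^{1/p}\|\cdot\|_p$ with $p\ge2$, and let $\theta^*$ be a KKT point of $\min_\theta\frac12\phi_\alpha^2(\theta)$ s.t. $y_if(\theta,x_i)\ge1$ for all $i\in[K]$. Then there exist $h_i\in\partial^\circ_\theta f(\theta^*,x_i)$, $i\in[K]$, such that $\frac1L\theta^*$ is an optimal solution of $$\min_{\theta\in\mathbb R^n}\tfrac12\phi_\alpha^2(\theta)\quad\text{s.t.}\quad y_i\langle\theta,h_i\rangle_2\ge1\ \ \forall i\in[K].$$
   Context: $f(\theta,x)$ is locally Lipschitz in $\theta$ and $L$-homogeneous ($f(c\theta,x)=c^Lf(\theta,x)$, $c>0$), so Euler's identity $\langle\theta,h\rangle=Lf(\theta,x)$ holds for all $h\in\partial^\circ_\theta f(\theta,x)$. $q_i(\theta)=y_if(\theta,x_i)$. KKT point: feasible $\theta$ with $\lambda_i\ge0$ and $h_i'\in\partial^\circ q_i(\theta)$ such that $0\in\partial^\circ\frac12\phi_\alpha^2(\theta)-\sum_i\lambda_ih_i'$ and $\lambda_i(q_i(\theta)-1)=0$ for all $i$. *)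

(* Defs.v *)
From HB Require Import structures.
From mathcomp Require Import all_boot all_order all_algebra.
From mathcomp Require Import all_classical all_reals all_analysis.
Set Implicit Arguments. Unset Strict Implicit. Unset Printing Implicit Defensive.
Import Order.TTheory GRing.Theory Num.Theory.
Import numFieldNormedType.Exports.
Local Open Scope classical_set_scope.
Local Open Scope ring_scope.

Section Defs.
Variables (R : realType) (n : nat).
Notation vec := 'rV[R]_n.

Definition dotv (u v : vec) : R := \sum_(j < n) u ord0 j * v ord0 j.

Definition norm1 (theta : vec) : R := \sum_(j < n) `|theta ord0 j|.

Definition phip (p : R) (theta : vec) : R :=
  (p - 1) `^ (p^-1) * (\sum_(j < n) `|theta ord0 j| `^ p) `^ (p^-1).

(* locally Lipschitz (w.r.t. the library norm on row vectors; all norms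
   on R^n are equivalent) *)
Definition locally_lipschitz (g : vec -> R) : Prop :=
  forall theta : vec, exists2 d : R, 0 < d & exists C : R,
    forall a b : vec, `|a - theta| < d -> `|b - theta| < d ->
      `|g a - g b| <= C * `|a - b|.

(* Clarke generalized directional derivative
   g°(theta; v) = limsup_{y -> theta, t -> 0+} (g (y + t v) - g y) / t
               = inf_{d > 0} sup_{|y - theta| < d, 0 < t < d} ...           *)
Definition clarke_dd (g : vec -> R) (theta v : vec) : \bar R :=
  ereal_inf [set ereal_sup
      [set ((g (yt.1 + yt.2 *: v) - g yt.1) / yt.2)%:E
         | yt in [set yt : vec * R | `|yt.1 - theta| < d /\ 0 < yt.2 < d]]
    | d in [set d : R | 0 < d]].

Definition clarke_subdiff (g : vec -> R) (theta : vec) : set vec :=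
  [set h | forall v : vec, ((dotv h v)%:E <= clarke_dd g theta v)%E].

Definition KKT_point (K : nat) (phi : vec -> R) (q : 'I_K -> vec -> R)
    (theta : vec) : Prop :=
  (forall i, 1 <= q i theta) /\
  exists (lam : 'I_K -> R) (h' : 'I_K -> vec),
    (forall i, 0 <= lam i) /\
    (forall i, clarke_subdiff (q i) theta (h' i)) /\
    (exists2 g : vec, clarke_subdiff (fun th => 2^-1 * phi th ^+ 2) theta g
       & g - \sum_(i < K) lam i *: h' i = 0) /\
    (forall i, lam i * (q i theta - 1) = 0).

Definition lin_optimal (K : nat) (phi : vec -> R) (y : 'I_K -> R)
    (h : 'I_K -> vec) (theta : vec) : Prop :=
  (forall i, 1 <= y i * dotv theta (h i)) /\
  forall th : vec, (forall i, 1 <= y i * dotv th (h i)) ->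
    2^-1 * phi theta ^+ 2 <= 2^-1 * phi th ^+ 2.

End Defs.

(* Main.v *)
Require Import Defs.
From HB Require Import structures.
From mathcomp Require Import all_boot all_order all_algebra.
From mathcomp Require Import all_classical all_reals all_analysis.
From mathcomp Require Import ring lra.
Import Order.TTheory GRing.Theory Num.Theory.
Import numFieldNormedType.Exports.
Local Open Scope classical_set_scope.
Local Open Scope ring_scope.



Definition cset {R : realType} {n} (g : 'rV[R]_n -> R) th v (d : R) : set (\bar R) :=
  [set ((g (yt.1 + yt.2 *: v) - g yt.1) / yt.2)%:E
         | yt in [set yt : 'rV[R]_n * R | `|yt.1 - th| < d /\ 0 < yt.2 < d]].

Lemma clarke_ddE (R : realType) n (g : 'rV[R]_n -> R) th v :
  clarke_dd g th v = ereal_inf [set ereal_sup (cset g th v d) | d in [set d : R | 0 < d]].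
Proof. by []. Qed.

Lemma clarke_geP (R : realType) n (g : 'rV[R]_n -> R) th v (r : R) :
  (r%:E <= clarke_dd g th v)%E <->
  (forall d e : R, 0 < d -> 0 < e -> exists y t, `|y - th| < d /\ 0 < t < d /\
      r - e < (g (y + t *: v) - g y) / t).
Proof.
rewrite clarke_ddE; split.
- move=> H d e d0 e0.
  have H1 : (r%:E <= ereal_sup (cset g th v d))%E.
    apply: (le_trans H); apply: ereal_inf_lbound; by exists d.
  have H2 : ((r - e)%:E < ereal_sup (cset g th v d))%E.
    apply: lt_le_trans H1; rewrite lte_fin; by rewrite ltrBlDr ltrDl.
  have [z [[y t] /= [Hy Ht] <-]] := ereal_sup_gt H2.
  rewrite lte_fin => Hz.
  by exists y, t.
- move=> H; apply: le_ereal_inf_tmp => z [d /= d0 <-].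
  apply/lee_subgt0Pr => e e0.
  have [y [t [Hy [Ht Hq]]]] := H d e d0 e0.
  apply: le_ereal_sup_tmp; exists ((g (y + t *: v) - g y) / t)%:E.
    by exists (y, t).
  by rewrite -EFinB lee_fin ltW.
Qed.

Section Dot.
Variables (R : realType) (n : nat).
Implicit Types (u v w : 'rV[R]_n).
Lemma dotvZl c u v : dotv (c *: u) v = c * dotv u v.
Proof. rewrite /dotv mulr_sumr; apply: eq_bigr => j _; by rewrite mxE mulrA. Qed.
Lemma dotvZr c u v : dotv u (c *: v) = c * dotv u v.
Proof. rewrite /dotv mulr_sumr; apply: eq_bigr => j _; by rewrite mxE mulrCA. Qed.
Lemma dotvDl u v w : dotv (u + v) w = dotv u w + dotv v w.
Proof. rewrite /dotv -big_split; apply: eq_bigr => j _; by rewrite mxE mulrDl. Qed.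
Lemma dotvDr u v w : dotv w (u + v) = dotv w u + dotv w v.
Proof. rewrite /dotv -big_split; apply: eq_bigr => j _; by rewrite mxE mulrDr. Qed.
Lemma dotvNl u v : dotv (- u) v = - dotv u v.
Proof. by rewrite -scaleN1r dotvZl mulN1r. Qed.
Lemma dotvNr u v : dotv u (- v) = - dotv u v.
Proof. by rewrite -scaleN1r dotvZr mulN1r. Qed.
Lemma dotv0l v : dotv 0 v = 0.
Proof. by rewrite -(scale0r 0) dotvZl mul0r. Qed.
Lemma dotv_suml (K : nat) (F : 'I_K -> 'rV[R]_n) v :
  dotv (\sum_(i < K) F i) v = \sum_(i < K) dotv (F i) v.
Proof.
elim/big_rec2: _ => [|i y1 y2 _ <-]; first exact: dotv0l.
by rewrite dotvDl.
Qed.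
End Dot.

Lemma subdiff_scale (R : realType) n (g : 'rV[R]_n -> R) (c : R) th h :
  c != 0 -> clarke_subdiff (fun t => c * g t) th h -> clarke_subdiff g th (c^-1 *: h).
Proof.
move=> c0 H v; apply/clarke_geP => d e d0 e0; rewrite dotvZl.
have [cneg|cpos|ceq] := ltgtP c 0; last by move: c0; rewrite ceq eqxx.
- have v1 : 0 < 1 + `|v| by rewrite ltr_pwDl.
  pose d' := d / (1 + `|v|).
  have d'0 : 0 < d' by rewrite divr_gt0.
  have dd : d' * (1 + `|v|) = d by rewrite /d' mulfVK ?gt_eqF.
  have d'd : d' <= d by have := normr_ge0 v; nra.
  have e'0 : 0 < - c * e by rewrite mulr_gt0 ?oppr_gt0.
  have [y [t [Hy [/andP[t0 td] Hq]]]] := (proj1 (clarke_geP _ _ _ _ _ _) (H (- v))) d' _ d'0 e'0.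
  exists (y + t *: - v), t; split; [|split].
  + rewrite (_ : y + t *: - v - th = (y - th) + (t *: - v)); last first.
      by rewrite addrAC.
    apply: (le_lt_trans (ler_normD _ _)).
    rewrite normrZ normrN ger0_norm ?ltW //.
    have : `|v| * t <= `|v| * d' by rewrite ler_wpM2l // ltW.
        nra.
  + rewrite t0 /=; exact: lt_le_trans td d'd.
  + move: Hq; rewrite dotvNr scalerN addrNK.
    set Q := (g y - g (y - t *: v)) / t.
    have -> : (c * g (y - t *: v) - c * g y) / t = - c * Q.
      by rewrite /Q; ring.
    move=> Hq.
    rewrite -(ltr_nM2l cneg) mulrBr [c * (c^-1 * _)]mulrA mulfV // mul1r.
    lra.
- have [y [t [Hy [Ht Hq]]]] := (proj1 (clarke_geP _ _ _ _ _ _) (H v)) d (c * e) d0 (mulr_gt0 cpos e0).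
  exists y, t; split => //; split => //.
  move: Hq; set Q := (g (y + t *: v) - g y) / t.
  have -> : (c * g (y + t *: v) - c * g y) / t = c * Q by rewrite /Q; ring.
  move=> Hq.
  rewrite -(ltr_pM2l cpos) mulrBr (mulrA c) mulfV ?gt_eqF // mul1r.
  lra.
Qed.



Lemma subdiff_convex (R : realType) n (psi : 'rV[R]_n -> R) th gg z :
  (forall a b (t : R), 0 <= t <= 1 -> psi ((1-t) *: a + t *: b) <= (1-t) * psi a + t * psi b) ->
  (forall a (e : R), 0 < e -> exists2 dl : R, 0 < dl & forall b, `|b - a| < dl -> `|psi b - psi a| < e) ->
  clarke_subdiff psi th gg -> dotv gg (z - th) <= psi z - psi th.
Proof.
move=> cvx cont H; set v := z - th.
rewrite leNgt; apply/negP => Hlt.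
set G := dotv gg v in Hlt *; set D := psi z - psi th in Hlt *.
pose e := (G - D) / 4.
have e0 : 0 < e by rewrite divr_gt0 // subr_gt0.
have [dl1 dl10 Hd1] := cont th e e0.
have [dl2 dl20 Hd2] := cont z e e0.
pose d := Num.min 1 (Num.min dl1 dl2).
have d0 : 0 < d by rewrite /d !lt_min ltr01 dl10 dl20.
have [y [t [Hy [/andP[t0 td] Hq]]]] := (proj1 (clarke_geP _ _ _ _ _ _) (H v)) d e d0 e0.
have d1 : d <= 1 by rewrite /d ge_min lexx.
have d2 : d <= dl1 by rewrite /d !ge_min lexx !orbT.
have d3 : d <= dl2 by rewrite /d !ge_min lexx !orbT.
have hcv := cvx y (y + v) t.
have {hcv} hcv : psi (y + t *: v) <= (1 - t) * psi y + t * psi (y + v).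
  rewrite -(_ : (1 - t) *: y + t *: (y + v) = y + t *: v); last first.
    by rewrite scalerDr scalerBl scale1r addrA subrK.
  apply: hcv; by rewrite (ltW t0) (ltW (lt_le_trans td d1)).
have H1 := Hd1 y (lt_le_trans Hy d2).
have H2 : `|psi (y + v) - psi z| < e.
  apply: Hd2; rewrite (_ : y + v - z = y - th) //; first exact: lt_le_trans Hy d3.
  by rewrite /v addrA addrAC addrK.
have Hq2 : (psi (y + t *: v) - psi y) / t <= psi (y + v) - psi y.
  rewrite ler_pdivrMr //; nra.
move: H1 H2; rewrite !ltr_norml => /andP[H1 H1'] /andP[H2 H2'].
have : G - e < psi (y + v) - psi y by exact: lt_le_trans Hq Hq2.
rewrite /e /D in H1 H1' H2 H2' Hlt *.
lra.
Qed.



Lemma conv_pow (R : realType) (p l x y : R) : 1 <= p -> 0 <= l <= 1 -> 0 <= x -> 0 <= y ->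
  (l * x + (1 - l) * y) `^ p <= l * x `^ p + (1 - l) * y `^ p.
Proof.
move=> p1 /andP[l0 l1] x0 y0.
have := convex_powR p1 (Itv01 l0 l1).
move=> /(_ x y); rewrite !inE /= !in_itv /= !andbT => /(_ x0 y0).
by rewrite !convRE.
Qed.

Lemma eq_leR (R : realType) (x y : R) : x = y -> x <= y.
Proof. by move->. Qed.

Section Pnorm.
Variables (R : realType) (n : nat) (p : R).
Hypothesis p1 : 1 <= p.
Let p0 : 0 < p. Proof. exact: lt_le_trans ltr01 p1. Qed.
Definition Sp (a : 'rV[R]_n) := \sum_(j < n) `|a ord0 j| `^ p.
Definition Fp (a : 'rV[R]_n) := Sp a `^ p^-1.

Lemma Sp_ge0 a : 0 <= Sp a.
Proof. by apply: sumr_ge0 => j _; exact: powR_ge0. Qed.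

Lemma Fp_pow a : Fp a `^ p = Sp a.
Proof. by rewrite /Fp -powRrM mulVf ?gt_eqF // powRr1 ?Sp_ge0. Qed.

Lemma powR_le (x y r : R) : 0 <= r -> 0 <= x -> x <= y -> x `^ r <= y `^ r.
Proof.
move=> r0 x0 xy; apply: (ge0_ler_powR r0) => //; rewrite nnegrE //.
exact: le_trans xy.
Qed.

Lemma Fp_eq0 a : Fp a = 0 -> forall j, a ord0 j = 0.
Proof.
move=> /powR_eq0_eq0 /eqP; rewrite psumr_eq0; last by move=> j _; exact: powR_ge0.
move=> /allP H j; have /implyP := H j (mem_index_enum _).
move=> /(_ isT) /eqP /powR_eq0_eq0 /eqP; by rewrite normr_eq0 => /eqP.
Qed.

Lemma Sp_tri a b A B : Fp a = A -> Fp b = B -> 0 < A -> 0 < B -> Sp (a + b) <= (A + B) `^ p.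
Proof.
move=> HA HB A0 B0.
have EA : Sp a = A `^ p by rewrite -HA Fp_pow.
have EB : Sp b = B `^ p by rewrite -HB Fp_pow.
have AB0 : 0 < A + B by rewrite addr_gt0.
pose l := A / (A + B).
have l0 : 0 <= l by rewrite divr_ge0 // ltW.
have l1 : l <= 1 by rewrite ler_pdivrMr // mul1r lerDl ltW.
have l1' : 1 - l = B / (A + B).
  by rewrite /l; field; rewrite gt_eqF.
have SA : 0 < Sp a by rewrite EA powR_gt0.
have SB : 0 < Sp b by rewrite EB powR_gt0.
have key : forall (x : R) (C : R), 0 <= x -> 0 < C -> (x / C) `^ p = x `^ p / C `^ p.
  move=> x C x0 C0; rewrite powRM // ?invr_ge0 ?ltW //.
  congr (_ * _).
  have -> : C^-1 = C `^ (-1) by rewrite powR_inv1 // ltW.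
  by rewrite -powRrM mulrC powRrM powR_inv1 // powR_ge0.
apply: (@le_trans _ _ (\sum_(j < n) (A + B) `^ p *
   (l / Sp a * `|a ord0 j| `^ p + (1 - l) / Sp b * `|b ord0 j| `^ p))).
  apply: ler_sum => j _.
  set x := `|a ord0 j|; set y := `|b ord0 j|.
  have x0 : 0 <= x by exact: normr_ge0.
  have y0 : 0 <= y by exact: normr_ge0.
  have e1 : x + y = (A + B) * (l * (x / A) + (1 - l) * (y / B)).
    rewrite l1' /l; field.
    by rewrite !gt_eqF.
  apply: (@le_trans _ _ ((x + y) `^ p)).
    apply: powR_le => //; first exact: ltW.
    by rewrite mxE ler_normD.
  have hc : 0 <= l * (x / A) + (1 - l) * (y / B).
    by rewrite addr_ge0 // mulr_ge0 // ?divr_ge0 // ?subr_ge0 // ltW.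
  rewrite e1 (powRM _ (ltW AB0) hc).
  rewrite ler_wpM2l ?powR_ge0 //.
  have l01 : 0 <= l <= 1 by rewrite l0 l1.
  have := @conv_pow R p l _ _ p1 l01 (divr_ge0 x0 (ltW A0)) (divr_ge0 y0 (ltW B0)).
  move/le_trans; apply.
  rewrite (key _ _ x0 A0) (key _ _ y0 B0) -EA -EB.
  by rewrite le_eqVlt; apply/orP; left; apply/eqP; ring.
rewrite -mulr_sumr big_split /= -[\sum_(j < n) l / Sp a * _]mulr_sumr -[\sum_(j < n) (1 - l) / Sp b * _]mulr_sumr.
rewrite -/(Sp a) -/(Sp b) !mulfVK ?gt_eqF // subrKC mulr1 //.
Qed.

Lemma Fp_tri a b : Fp (a + b) <= Fp a + Fp b.
Proof.
have [A0|A0] := eqVneq (Fp a) 0.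
  rewrite A0 add0r /Fp /Sp; apply: eq_leR; congr (_ `^ _); apply: eq_bigr => j _.
  by rewrite mxE (Fp_eq0 _ A0) add0r.
have [B0|B0] := eqVneq (Fp b) 0.
  rewrite B0 addr0 /Fp /Sp; apply: eq_leR; congr (_ `^ _); apply: eq_bigr => j _.
  by rewrite mxE (Fp_eq0 _ B0) addr0.
have Ap : 0 < Fp a by rewrite lt0r A0 /=; apply: powR_ge0.
have Bp : 0 < Fp b by rewrite lt0r B0 /=; apply: powR_ge0.
have r0 : 0 <= p^-1 by rewrite invr_ge0 ltW.
rewrite {1}/Fp; apply: (le_trans (powR_le _ _ _ r0 (Sp_ge0 _) (Sp_tri _ _ _ _ erefl erefl Ap Bp))).
have s0 := addr_ge0 (ltW Ap) (ltW Bp).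
by rewrite -powRrM (mulfV (lt0r_neq0 p0)) (powRr1 s0).
Qed.
End Pnorm.

Set Implicit Arguments. Unset Strict Implicit.


Arguments Sp {R n}. Arguments Fp {R n}. Arguments Fp_tri {R n p}. Arguments Sp_ge0 {R n p}.
Arguments powR_le {R x y r}.

Lemma entry_le (R : realType) n (a : 'rV[R]_n) j : `|a ord0 j| <= `|a|.
Proof.
have -> : `|a| = mx_norm a by [].
rewrite mx_normrE.
exact: (le_bigmax _ _ (ord0, j)).
Qed.

Definition normlike {R : realType} {n} (phi : 'rV[R]_n -> R) :=
  [/\ forall a, 0 <= phi a,
      forall a b, phi (a + b) <= phi a + phi b,
      forall c a, 0 <= c -> phi (c *: a) = c * phi a &
      exists2 C, 0 <= C & forall a, phi a <= C * `|a| ].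

Lemma normlike_norm1 (R : realType) n : normlike (@norm1 R n).
Proof.
split.
- by move=> a; apply: sumr_ge0 => j _.
- move=> a b; rewrite /norm1 -big_split /=; apply: ler_sum => j _.
  by rewrite mxE ler_normD.
- move=> c a c0; rewrite /norm1 mulr_sumr; apply: eq_bigr => j _.
  by rewrite mxE normrM ger0_norm.
- exists n%:R => // a; rewrite /norm1.
  apply: (@le_trans _ _ (\sum_(j < n) `|a|)); first by apply: ler_sum => j _; exact: entry_le.
  by rewrite sumr_const card_ord mulr_natl.
Qed.

Lemma normlike_Fp (R : realType) n (p : R) : 1 <= p -> normlike (@Fp R n p).
Proof.
move=> p1; have p0 : 0 < p by exact: lt_le_trans ltr01 p1.
split.
- by move=> a; exact: powR_ge0.
- by move=> a b; exact: Fp_tri.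
- move=> c a c0.
  have HS : Sp p (c *: a) = c `^ p * Sp p a.
    rewrite /Sp mulr_sumr; apply: eq_bigr => j _.
    by rewrite mxE normrM ger0_norm // powRM.
  rewrite /Fp HS (powRM _ (powR_ge0 _ _) (Sp_ge0 a)) -powRrM (mulfV (lt0r_neq0 p0)) (powRr1 c0).
  done.
- exists (n%:R `^ p^-1); first exact: powR_ge0.
  move=> a; rewrite /Fp.
  have -> : `|a| = (`|a| `^ p) `^ p^-1.
    by rewrite -powRrM mulfV ?gt_eqF // powRr1.
  rewrite -powRM ?powR_ge0 //.
  apply: powR_le; [by rewrite invr_ge0 ltW | exact: Sp_ge0 |].
  apply: (@le_trans _ _ (\sum_(j < n) `|a| `^ p)).
    apply: ler_sum => j _; apply: powR_le; [exact: ltW | exact: normr_ge0 | exact: entry_le].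
  by rewrite sumr_const card_ord mulr_natl.
Qed.

Lemma normlike_scale (R : realType) n (phi : 'rV[R]_n -> R) k :
  0 <= k -> normlike phi -> normlike (fun a => k * phi a).
Proof.
move=> k0 [h1 h2 h3 [C C0 h4]]; split.
- by move=> a; rewrite mulr_ge0.
- by move=> a b; rewrite -mulrDr ler_wpM2l.
- by move=> c a c0; rewrite h3 // mulrCA.
- exists (k * C); first by rewrite mulr_ge0.
  by move=> a; rewrite -mulrA ler_wpM2l.
Qed.

Unset Implicit Arguments. Set Strict Implicit.



Section Psi.
Variables (R : realType) (n : nat) (phi : 'rV[R]_n -> R).
Hypothesis Hn : normlike phi.
Let psi a := 2^-1 * phi a ^+ 2.

Lemma psi_convex a b (t : R) : 0 <= t <= 1 ->
  psi ((1-t) *: a + t *: b) <= (1-t) * psi a + t * psi b.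
Proof.
case: Hn => h1 h2 h3 _ /andP[t0 t1].
have m : phi ((1-t) *: a + t *: b) <= (1-t) * phi a + t * phi b.
  by rewrite -h3 ?subr_ge0 // -(h3 t) //; exact: h2.
have c0 := h1 ((1-t) *: a + t *: b).
have a0 := h1 a. have b0 := h1 b.
rewrite /psi.
have t2 : 0 <= 1 - t by rewrite subr_ge0.
have hsq : ((1-t) * phi a + t * phi b) ^+ 2 <= (1-t) * phi a ^+ 2 + t * phi b ^+ 2.
  have := mulr_ge0 (mulr_ge0 t0 t2) (sqr_ge0 (phi a - phi b)).
  move=> H; rewrite -subr_ge0; apply: le_trans H _; apply: eq_leR; ring.
have hsq2 : phi ((1-t) *: a + t *: b) ^+ 2 <= ((1-t) * phi a + t * phi b) ^+ 2.
  by rewrite ler_sqr // nnegrE ?addr_ge0 ?mulr_ge0.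
lra.
Qed.

Lemma psi_hom c a : 0 <= c -> psi (c *: a) = c ^+ 2 * psi a.
Proof. case: Hn => _ _ h3 _ c0; rewrite /psi h3 //; ring. Qed.

Lemma psi_cont a (e : R) : 0 < e ->
  exists2 dl : R, 0 < dl & forall b, `|b - a| < dl -> `|psi b - psi a| < e.
Proof.
case: Hn => h1 h2 h3 [C C0 h4] e0.
pose K := C * (2 * phi a + C) + 1.
have a0 := h1 a.
have K0 : 0 < K by rewrite /K ltr_pwDr // mulr_ge0 // addr_ge0 // mulr_ge0.
exists (Num.min 1 (e / K)); first by rewrite lt_min ltr01 divr_gt0.
move=> b; rewrite lt_min => /andP[x1 xK].
set x := `|b - a| in x1 xK.
have x0 : 0 <= x by exact: normr_ge0.
have xK' : x * K < e by rewrite -ltr_pdivlMr.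
have u1 : phi b - phi a <= C * x.
  have := h2 a (b - a); rewrite addrC subrK => H.
  have := h4 (b - a); rewrite -/x; lra.
have u2 : phi a - phi b <= C * x.
  have := h2 b (a - b); rewrite addrC subrK => H.
  have := h4 (a - b); rewrite distrC -/x; lra.
have b0 := h1 b.
rewrite /psi ltr_norml; apply/andP; split.
- have Cx : C * x <= C by rewrite ler_piMr // ltW.
  rewrite /K in xK'; nra.
- have Cx : C * x <= C by rewrite ler_piMr // ltW.
  rewrite /K in xK'; nra.
Qed.
End Psi.



Lemma dotvC (R : realType) n (u v : 'rV[R]_n) : dotv u v = dotv v u.
Proof. by apply: eq_bigr => j _; rewrite mulrC. Qed.

Theorem lemmaH2 (R : realType) (n : nat) (X : Type) (K : nat)
  (f : 'rV[R]_n -> X -> R) (L : R) (x : 'I_K -> X) (y : 'I_K -> R)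
  (phi : 'rV[R]_n -> R) (thetas : 'rV[R]_n) :
  0 < L ->
  (forall xx : X, locally_lipschitz (fun th => f th xx)) ->
  (forall (xx : X) (c : R) (th : 'rV[R]_n), 0 < c -> f (c *: th) xx = c `^ L * f th xx) ->
  (forall (xx : X) (th h : 'rV[R]_n), clarke_subdiff (fun t => f t xx) th h ->
     dotv th h = L * f th xx) ->
  (phi = @norm1 R n \/ exists2 p : R, 2 <= p & phi = @phip R n p) ->
  KKT_point phi (fun i th => y i * f th (x i)) thetas ->
  exists h : 'I_K -> 'rV[R]_n,
    (forall i, clarke_subdiff (fun th => f th (x i)) thetas (h i)) /\
    lin_optimal phi y h (L^-1 *: thetas).
Proof.
move=> L0 _ _ euler hphi [feas [lam [h' [lam0 [hsub [[g gsub gsum] cs]]]]]].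
have y0 : forall i, y i != 0.
  move=> i; apply/eqP => yi0; have := feas i; rewrite yi0 mul0r; lra.
have hsubf : forall i, clarke_subdiff (fun th => f th (x i)) thetas ((y i)^-1 *: h' i).
  move=> i; exact: (@subdiff_scale R n (fun th => f th (x i)) (y i) thetas (h' i) (y0 i) (hsub i)).
have Hn : normlike phi.
  case: hphi => [->|[p p2 ->]]; first exact: normlike_norm1.
  apply: normlike_scale; first exact: powR_ge0.
  apply: normlike_Fp; lra.
exists (fun i => (y i)^-1 *: h' i); split => //.
have hh' : forall i, y i *: ((y i)^-1 *: h' i) = h' i.
  by move=> i; rewrite scalerA mulfV // scale1r.
have eul : forall i, dotv thetas ((y i)^-1 *: h' i) = L * f thetas (x i).
  move=> i; exact: euler (hsubf i).
split.
- move=> i; rewrite dotvZl eul mulKf ?gt_eqF //.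
- move=> th thf.
  have gE : g = \sum_(i < K) lam i *: h' i by apply/eqP; rewrite -subr_eq0 gsum.
  have HB := @subdiff_convex R n (fun a => 2^-1 * phi a ^+ 2) thetas g (L *: th) (@psi_convex R n phi Hn) (@psi_cont R n phi Hn) gsub.
  have Hg : 0 <= dotv g (L *: th - thetas).
    rewrite gE dotv_suml; apply: sumr_ge0 => i _.
    rewrite dotvZl -(hh' i) dotvZl dotvDr dotvNr dotvZr (dotvC _ _ _ th) (dotvC _ _ _ thetas) eul.
    have := thf i; have := cs i; have := lam0 i.
    set D := dotv th _; move=> l0 csi fi.
    have : 0 <= lam i * (y i * D - 1) by rewrite mulr_ge0 // subr_ge0.
    nra.
  have H2 := le_trans Hg HB.
  have E1 : 2^-1 * phi (L *: th) ^+ 2 = L ^+ 2 * (2^-1 * phi th ^+ 2).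
    exact: (@psi_hom R n phi Hn L th (ltW L0)).
  have E2 : 2^-1 * phi thetas ^+ 2 = L ^+ 2 * (2^-1 * phi (L^-1 *: thetas) ^+ 2).
    rewrite -(@psi_hom R n phi Hn L _ (ltW L0)) scalerA mulfV ?gt_eqF // scale1r //.
  move: H2; rewrite E1 E2 subr_ge0 ler_pM2l //.
  by rewrite exprn_gt0.
Qed.
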